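(* Let $q\in\mathbb{C}\setminus\{0\}$ be not a root of unity, let $\lambda,\mu$ be strict partitions with $|\lambda|=|\mu|=n$, let $\Lambda\in\mathcal S_\lambda$, $\Gamma\in\mathcal S_\mu$, and let $\nu_1,\nu_2\in\{-1,1\}^n$. If $\big((q_k^\Lambda)^{\nu_1(k)}\big)_{k=1}^n=\big((q_k^\Gamma)^{\nu_2(k)}\big)_{k=1}^n$, then $\Lambda=\Gamma$. In particular $P(\lambda)\cap P(\mu)=\emptyset$ if $\lambda\neq\mu$.
   Context: $[m]_{q^2}=(q^{2m}-q^{-2m})/(q^2-q^{-2})$; for each integer $m\ge0$ a square root $s_m$ of $[m+1]_{q^2}[m]_{q^2}$ is fixed once and for all and $x_m=[m+1]_{q^2}-[m]_{q^2}-(q-q^{-1})s_m$. For a strict partition $\lambda$ (distinct positive parts), the shifted diagram has boxes $(i,j)$ with $i\le j\le i+\lambda_i-1$; $\mathcal S_\lambda$ is the set of standard shifted tableaux (fillings by $1,\dots,|\lambda|$ increasing along rows and columns). For $\Lambda\in\mathcal S_\lambda$ and $k$, let $(i_k,j_k)$ be the box containing $k$ and $q_k^\Lambda=x_{j_k-i_k}$. $P(\lambda)$ denotes the set of weights of the Jones–Nazarov $G_n$-module $V_\lambda$ with respect to its commuting Jucys–Murphy elements; concretely $P(\lambda)=\{((q_k^\Lambda)^{\nu(k)})_{k=1}^n:\Lambda\in\mathcal S_\lambda,\ \nu\in\{\pm1\}^n\}$. *)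

(* Defs.v *)
From HB Require Import structures.
From mathcomp Require Import all_boot all_order all_algebra.
From mathcomp Require Export complex.
From mathcomp Require Export reals.
Set Implicit Arguments. Unset Strict Implicit. Unset Printing Implicit Defensive.
Import Order.TTheory GRing.Theory Num.Theory.
Local Open Scope ring_scope.

Definition qint (F : fieldType) (q : F) (m : nat) : F :=
  (q ^+ (2 * m) - q ^- (2 * m)) / (q ^+ 2 - q ^- 2).

Definition xq (F : fieldType) (q : F) (s : nat -> F) (m : nat) : F :=
  qint q m.+1 - qint q m - (q - q^-1) * s m.

Definition strict_partition (la : seq nat) : bool :=
  sorted (fun a b => b < a)%N la && all (fun p => 0 < p)%N la.

(* box (i,j) (1-indexed) lies in the shifted diagram of la:
   1 <= i <= l(la), i <= j <= i + la_i - 1 *)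
Definition in_shifted (la : seq nat) (b : nat * nat) : bool :=
  [&& (1 <= b.1)%N, (b.1 <= size la)%N, (b.1 <= b.2)%N
    & (b.2 < b.1 + nth 0%N la b.1.-1)%N].

(* A standard shifted tableau of shape la with n boxes, encoded by
   pos : 'I_n -> nat * nat, where pos k is the box containing the entry k+1. *)
Definition is_sst (la : seq nat) (n : nat) (pos : {ffun 'I_n -> nat * nat}) : Prop :=
  [/\ injective pos,
      (forall k, in_shifted la (pos k)),
      (forall b, in_shifted la b -> exists k, pos k = b),
      (forall k l : 'I_n, (pos k).1 = (pos l).1 -> ((pos k).2 < (pos l).2)%N -> (k < l)%N)
    & (forall k l : 'I_n, (pos k).2 = (pos l).2 -> ((pos k).1 < (pos l).1)%N -> (k < l)%N)].

Definition qk (F : fieldType) (q : F) (s : nat -> F) (n : nat)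
  (pos : {ffun 'I_n -> nat * nat}) (k : 'I_n) : F :=
  xq q s ((pos k).2 - (pos k).1)%N.

(* Main.v *)
Require Import Defs.
From HB Require Import structures.
From mathcomp Require Import all_boot all_order all_algebra.
From mathcomp Require Import complex reals.
From mathcomp Require Import ring lra zify.
Import Order.TTheory GRing.Theory Num.Theory.
Local Open Scope ring_scope.

Section Alg.
Variable F : numFieldType.
Variable q : F.
Hypothesis hq0 : q != 0.
Hypothesis hq : forall m : nat, (0 < m)%N -> q ^+ m != 1.

Lemma q4 : q ^+ 2 - q ^- 2 != 0.
Proof.
apply/negP => /eqP h.
have : q ^+ 4 == 1.
  have e : q ^+ 2 = q ^- 2 by apply/eqP; rewrite -subr_eq0 h.
  have u : q ^+ 2 != 0 by rewrite expf_neq0.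
  have : q ^+ 2 * q ^+ 2 = 1 by rewrite {1}e mulVf.
  by rewrite -exprD => ->.
by rewrite (negbTE (hq _ _)).
Qed.

Lemma qintS m : qint q m.+1 = (q ^+ 2 * q ^+ (2 * m) - (q ^+ 2 * q ^+ (2 * m))^-1) / (q ^+ 2 - q ^- 2).
Proof. by rewrite /qint mulnS exprD. Qed.

Definition gg m := qint q m.+1 - qint q m.

Lemma xq_inv (s : nat -> F) (hs : forall m : nat, s m ^+ 2 = qint q m.+1 * qint q m) m :
  xq q s m * (2 * gg m - xq q s m) = 1.
Proof.
have e : xq q s m * (2 * gg m - xq q s m) = gg m ^+ 2 - (q - q^-1) ^+ 2 * s m ^+ 2.
  rewrite /xq /gg; ring.
rewrite e hs /gg qintS /qint.
have p0 : q ^+ (2 * m) != 0 by rewrite expf_neq0.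
have h4 := q4.
field.
by rewrite hq0 p0 andbT /= -expr2 -exprM subr_eq0 (hq 4).
Qed.

Lemma xq_neq0 (s : nat -> F) (hs : forall m : nat, s m ^+ 2 = qint q m.+1 * qint q m) m :
  xq q s m != 0.
Proof.
apply/negP => /eqP h; have := xq_inv s hs m; rewrite h mul0r => /eqP.
by rewrite eq_sym oner_eq0.
Qed.

Lemma qpow_inj a b : q ^+ a = q ^+ b -> a = b.
Proof.
wlog lab : a b / (a <= b)%N.
  move=> W e; case: (leqP a b) => h; first exact: W.
  by symmetry; apply: W; [exact: ltnW | ].
move=> e; case: (ltngtP a b) => // lt; last by move: lab; rewrite leqNgt lt.
move: e; rewrite -(subnKC lab) exprD -{1}(mulr1 (q ^+ a)) => /mulfI.
move=> /(_ (expf_neq0 _ hq0)) /esym /eqP.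
by rewrite (negbTE (hq _ _)) // subn_gt0.
Qed.

Lemma gg_form m : gg m * (q ^+ 2 + 1) * q ^+ (2 * m) = q ^+ 2 * (q ^+ (2 * m)) ^+ 2 + 1.
Proof.
rewrite /gg qintS /qint.
have p0 : q ^+ (2 * m) != 0 by rewrite expf_neq0.
have h4 := q4.
field.
by rewrite hq0 p0 andbT /= -expr2 -exprM subr_eq0 (hq 4).
Qed.

Lemma gg_inj m k : gg m = gg k -> m = k.
Proof.
move=> e.
have w1 : q ^+ 2 + 1 != 0.
  apply/negP => /eqP h.
  have : q ^+ 4 = 1.
    have -> : q ^+ 4 = (q ^+ 2 + 1) * (q ^+ 2 - 1) + 1.
      by ring.
    by rewrite h mul0r add0r.
  by move/eqP; rewrite (negbTE (hq 4 _)).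
have fm := gg_form m; have fk := gg_form k.
set P := q ^+ (2 * m) in fm; set Q := q ^+ (2 * k) in fk.
have key : (P - Q) * (q ^+ 2 * P * Q - 1) = 0.
  have : (q ^+ 2 * P ^+ 2 + 1) * Q = (q ^+ 2 * Q ^+ 2 + 1) * P.
    by rewrite -fm -fk e; ring.
  move=> h; rewrite -[LHS]subr0 -(subrr ((q ^+ 2 * P ^+ 2 + 1) * Q)) {2}h; ring.
move/eqP: key; rewrite mulf_eq0 => /orP [| ].
  by rewrite subr_eq0 => /eqP /qpow_inj /eqP; rewrite eqn_mul2l /= => /eqP.
rewrite subr_eq0 /P /Q -!exprD => /eqP /(@esym _ _ _).
by move=> h; exfalso; move: (hq (2 + 2 * m + 2 * k) isT); rewrite -h eqxx.
Qed.

Lemma sum_inv (s : nat -> F) (hs : forall m : nat, s m ^+ 2 = qint q m.+1 * qint q m) m (nu : int) :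
  (nu = 1 \/ nu = -1) -> xq q s m ^ nu + (xq q s m ^ nu)^-1 = 2 * gg m.
Proof.
have inv : (xq q s m)^-1 = 2 * gg m - xq q s m.
  by apply: (mulfI (xq_neq0 s hs m)); rewrite mulfV ?xq_inv ?xq_neq0.
case=> ->.
  by rewrite expr1z inv; ring.
by rewrite exprN1 invrK inv; ring.
Qed.

End Alg.
Lemma sp_lt la i : strict_partition la -> (i.+1 < size la)%N -> (nth 0 la i.+1 < nth 0 la i)%N.
Proof. by case/andP => /(sortedP 0%N) h _ /h. Qed.

Lemma sp_pos la i : strict_partition la -> (i < size la)%N -> (0 < nth 0 la i)%N.
Proof. by case/andP => _ /(all_nthP 0%N) h /h. Qed.

Lemma diag_step la b c : strict_partition la -> (1 <= b)%N ->
  in_shifted la (b.+1, b.+1 + c) -> in_shifted la (b, b + c) && in_shifted la (b, b + c.+1).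
Proof.
move=> hla hb /and4P [_ h1 _ h3]; rewrite /= in h1 h3.
have := @sp_lt la (b.-1) hla; rewrite prednK // => /(_ h1) lt.
rewrite /in_shifted /=; apply/andP; split; apply/and4P; split => //; try lia.
Qed.

Lemma diag_down la n (T : {ffun 'I_n -> nat * nat}) (hT : is_sst la T) (hla : strict_partition la)
  a c d : (1 <= a)%N -> forall k : 'I_n, T k = (a + d, a + d + c)%N ->
  exists l : 'I_n, T l = (a, a + c)%N /\ (l <= k)%N.
Proof.
case: hT => Tinj Tin Tsurj Trow Tcol ha.
elim: d => [|d IH] k Tk.
  by exists k; rewrite Tk !addn0.
have := Tin k; rewrite Tk => hk.
have := @diag_step la (a + d) c hla ltac:(lia).
rewrite addnS addSn in hk; rewrite hk => /(_ isT) /andP [h0 h1].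
case: (Tsurj _ h0) => k0 e0; case: (Tsurj _ h1) => k1 e1.
have [l [el ll]] := IH k0 e0.
exists l; split => //.
have lt01 : (k0 < k1)%N by apply: Trow; rewrite e0 e1 //=; lia.
have lt1k : (k1 < k)%N by apply: Tcol; rewrite e1 Tk /=; lia.
lia.
Qed.

Lemma no_lower la1 la2 n (T1 T2 : {ffun 'I_n -> nat * nat}) (h1 : is_sst la1 T1) (h2 : is_sst la2 T2)
  (hla2 : strict_partition la2) (k : 'I_n) i i' c :
  (forall l : 'I_n, (l < k)%N -> T1 l = T2 l) ->
  T1 k = (i, i + c)%N -> T2 k = (i', i' + c)%N -> (i < i')%N -> False.
Proof.
move=> low e1 e2 lt.
have ha : (1 <= i)%N by case: h1 => _ Tin _ _ _; have := Tin k; rewrite e1 => /and4P [].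
have := @diag_down la2 n T2 h2 hla2 i c (i' - i) ha k.
rewrite subnKC ?(ltnW lt) // => /(_ e2) [l [el lk]].
have lnk : l != k by apply/eqP => lk'; move: e2; rewrite -lk' el => -[] h; lia.
have ltk : (l < k)%N by rewrite ltn_neqAle lnk lk.
case: h1 => Tinj _ _ _ _.
have : T1 l = T1 k by rewrite low // el e1.
by move/Tinj/eqP; rewrite (negbTE lnk).
Qed.

Lemma size_le la mu : strict_partition la -> (forall b, in_shifted la b = in_shifted mu b) ->
  (size la <= size mu)%N.
Proof.
move=> hla e; case: (posnP (size la)) => [-> //|sp].
have : in_shifted la (size la, size la).
  have := @sp_pos la (size la).-1 hla; rewrite prednK // => /(_ (leqnn _)).
  rewrite /in_shifted /= => p; apply/and4P; split => //; lia.
by rewrite e => /and4P [].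
Qed.

Lemma shape_inj la mu : strict_partition la -> strict_partition mu ->
  (forall b, in_shifted la b = in_shifted mu b) -> la = mu.
Proof.
move=> hla hmu e.
have es : size la = size mu.
  by apply/eqP; rewrite eqn_leq (@size_le la mu hla e) (@size_le mu la hmu) // => b; rewrite e.
apply: (eq_from_nth (x0 := 0%N) es) => i hi.
have key : forall m, (m < nth 0 la i)%N = (m < nth 0 mu i)%N.
  move=> m; have := e (i.+1, i.+1 + m).
  rewrite /in_shifted /= hi -es hi /= leq_addr /=.
  by rewrite !ltn_add2l.
apply/eqP; rewrite eqn_leq; apply/andP; split; rewrite leqNgt; apply/negP => h.
  by move: (key (nth 0 mu i)); rewrite h ltnn.
by move: (key (nth 0 la i)); rewrite h ltnn.
Qed.

Theorem lemma2p34 (R : realType) (q : R[i]) (s : nat -> R[i])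
  (hq0 : q != 0)
  (hq : forall m : nat, (0 < m)%N -> q ^+ m != 1)
  (hs : forall m : nat, s m ^+ 2 = qint q m.+1 * qint q m)
  (n : nat) (la mu : seq nat)
  (hla : strict_partition la) (hmu : strict_partition mu)
  (hlan : sumn la = n) (hmun : sumn mu = n)
  (Lam Gam : {ffun 'I_n -> nat * nat})
  (hLam : is_sst la Lam) (hGam : is_sst mu Gam)
  (nu1 nu2 : 'I_n -> int)
  (hnu1 : forall k, nu1 k = 1 \/ nu1 k = -1)
  (hnu2 : forall k, nu2 k = 1 \/ nu2 k = -1)
  (heq : forall k : 'I_n, qk q s Lam k ^ nu1 k = qk q s Gam k ^ nu2 k) :
  Lam = Gam /\ la = mu.
Proof.
have hc : forall k, ((Lam k).2 - (Lam k).1 = (Gam k).2 - (Gam k).1)%N.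
  move=> k; have := heq k; rewrite /qk => h.
  have e1 := @sum_inv _ q hq0 hq s hs ((Lam k).2 - (Lam k).1)%N (nu1 k) (hnu1 k).
  have e2 := @sum_inv _ q hq0 hq s hs ((Gam k).2 - (Gam k).1)%N (nu2 k) (hnu2 k).
  rewrite h e2 in e1.
  apply: (@gg_inj _ q hq0 hq); apply: (mulfI (_ : (2 : R[i]) != 0)) => //.
  by rewrite pnatr_eq0.
have eLG : Lam = Gam.
  apply/ffunP.
  suff H : forall m (k : 'I_n), (k < m)%N -> Lam k = Gam k by move=> k; apply: (H k.+1).
  elim=> [//|m IH] k; rewrite ltnS leq_eqVlt => /orP [/eqP km|]; last exact: IH.
  have low : forall l : 'I_n, (l < k)%N -> Lam l = Gam l by move=> l; rewrite km; apply: IH.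
  have low' : forall l : 'I_n, (l < k)%N -> Gam l = Lam l by move=> l /low ->.
  have := hc k.
  have : in_shifted la (Lam k) by case: hLam => _ Tin _ _ _; apply: Tin.
  have : in_shifted mu (Gam k) by case: hGam => _ Tin _ _ _; apply: Tin.
  case eL : (Lam k) => [i j]; case eG : (Gam k) => [i' j'] /=.
  move=> /and4P [_ _ hi' _] /and4P [_ _ hi _] /= ec.
  have eL' : Lam k = (i, i + (j - i))%N by rewrite eL subnKC.
  have eG' : Gam k = (i', i' + (j - i))%N by rewrite eG ec subnKC.
  case: (ltngtP i i') => c.
  - by case: (@no_lower la mu n Lam Gam hLam hGam hmu k i i' _ low eL' eG' c).
  - by case: (@no_lower mu la n Gam Lam hGam hLam hla k i' i _ low' eG' eL' c).
  - move: ec hi hi'; rewrite -c /= => ec hi hi'; congr pair; lia.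
split => //.
apply: shape_inj => // b; apply/idP/idP.
  case: hLam => _ _ Tsurj _ _ /Tsurj [k <-]; rewrite eLG.
  by case: hGam => _ Tin _ _ _; apply: Tin.
case: hGam => _ _ Tsurj _ _ /Tsurj [k <-]; rewrite -eLG.
by case: hLam => _ Tin _ _ _; apply: Tin.
Qed.
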